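(* Let $\pi:\mathbb R^n\times[0,\infty]\to[0,\infty]$ be an arbitrage-free price function. Then: (1) $\pi(\mathbf 0,v)=0$ for every $v\in[0,\infty]$; (2) if $v\le v'$ then $\pi(\mathbf q,v)\ge\pi(\mathbf q,v')$; (3) $\pi(\mathbf q,0)\ge\pi(\mathbf q,v)$ for all $v\ge 0$; (4) if $\pi$ is continuous, then $\pi(\mathbf q,\infty)=0$ for every $\mathbf q\in\mathbb R^n$.
   Context: A query is a pair $(\mathbf q,v)$ with $\mathbf q\in\mathbb R^n$ and $v\in[0,\infty]$ (arithmetic in $[0,\infty]$ with $0\cdot\infty=0$). The determinacy relation $\mathbf S\rightarrow\mathbf Q$ between finite multisets of queries and queries is the smallest relation satisfying: (Summation) for every $k\ge 0$, $\{(\mathbf q_1,v_1),\ldots,(\mathbf q_k,v_k)\}\rightarrow(\mathbf q_1+\cdots+\mathbf q_k,\,v_1+\cdots+v_k)$ (for $k=0$: $\emptyset\rightarrow(\mathbf 0,0)$); (Scalar multiplication) for every $c\in\mathbb R$, $\{(\mathbf q,v)\}\rightarrow(c\mathbf q,c^2v)$; (Relaxation) $\{(\mathbf q,v)\}\rightarrow(\mathbf q,v')$ whenever $v\le v'$; (Transitivity) if $\mathbf S_1\rightarrow\mathbf Q_1,\ldots,\mathbf S_k\rightarrow\mathbf Q_k$ and $\{\mathbf Q_1,\ldots,\mathbf Q_k\}\rightarrow\mathbf Q$, then $\mathbf S_1\uplus\cdots\uplus\mathbf S_k\rightarrow\mathbf Q$. A price function $\pi:\mathbb R^n\times[0,\infty]\to[0,\infty]$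 is arbitrage-free if for every $m\ge 0$ and queries $\mathbf Q_1,\ldots,\mathbf Q_m,\mathbf Q$ with $\{\mathbf Q_1,\ldots,\mathbf Q_m\}\rightarrow\mathbf Q$ we have $\pi(\mathbf Q)\le\sum_{i=1}^m\pi(\mathbf Q_i)$ (the empty sum being $0$). *)

(* Defs.v *)
From HB Require Import structures.
From mathcomp Require Import all_boot all_order all_algebra.
From mathcomp Require Import all_classical all_reals all_analysis.
Set Implicit Arguments. Unset Strict Implicit. Unset Printing Implicit Defensive.
Import Order.TTheory GRing.Theory Num.Theory.
Import numFieldNormedType.Exports.
Local Open Scope ring_scope.
Local Open Scope ereal_scope.

(* A query (q, v) with q in R^n (row vector) and v in [0, +oo] (an extended
   real; validity 0 <= v is imposed separately). In \bar R, 0 * +oo = 0. *)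
Notation query R n := ('rV[R]_n * \bar R)%type.

Definition valid_query (R : realType) (n : nat) (Q : query R n) : Prop :=
  0 <= Q.2.

(* Determinacy relation between finite multisets of (valid) queries
   (multisets represented as sequences, closed under permutation) and queries. *)
Inductive determines (R : realType) (n : nat) : seq (query R n) -> query R n -> Prop :=
| det_sum : forall s : seq (query R n),
    (forall Q, Q \in s -> valid_query Q) ->
    determines s ((\sum_(Q <- s) Q.1)%R, \sum_(Q <- s) Q.2)
| det_scale : forall (q : 'rV[R]_n) (v : \bar R) (c : R),
    0 <= v -> determines [:: (q, v)] ((c *: q)%R, (c ^+ 2)%:E * v)
| det_relax : forall (q : 'rV[R]_n) (v v' : \bar R),
    0 <= v -> v <= v' -> determines [:: (q, v)] (q, v')
| det_trans : forall (ss : seq (seq (query R n))) (Qs : seq (query R n)) (Q : query R n),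
    size ss = size Qs ->
    (forall i, (i < size ss)%N ->
       determines (nth [::] ss i) (nth (0%R, 0) Qs i)) ->
    determines Qs Q ->
    determines (flatten ss) Q
| det_perm : forall (s s' : seq (query R n)) (Q : query R n),
    perm_eq s s' -> determines s Q -> determines s' Q.

(* A price function pi : R^n x [0,oo] -> [0,oo] (values on v < 0 irrelevant). *)
Definition price_function (R : realType) (n : nat) (pi : query R n -> \bar R) : Prop :=
  forall Q, valid_query Q -> 0 <= pi Q.

Definition arbitrage_free (R : realType) (n : nat) (pi : query R n -> \bar R) : Prop :=
  forall (s : seq (query R n)) (Q : query R n),
    determines s Q -> pi Q <= \sum_(X <- s) pi X.

(* Main.v *)
Require Import Defs.
From HB Require Import structures.
From mathcomp Require Import all_boot all_order all_algebra.
From mathcomp Require Import all_classical all_reals all_analysis.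
Import Order.TTheory GRing.Theory Num.Theory.
Import numFieldNormedType.Exports.
Local Open Scope classical_set_scope.
Local Open Scope ring_scope.

Theorem proposition3 (R : realType) (n : nat) (pi : query R n -> \bar R) :
  price_function pi -> arbitrage_free pi ->
  (forall v : \bar R, (0 <= v)%E -> pi (0, v) = 0%E) /\
  (forall (q : 'rV[R]_n) (v v' : \bar R), (0 <= v)%E -> (v <= v')%E ->
     (pi (q, v') <= pi (q, v))%E) /\
  (forall (q : 'rV[R]_n) (v : \bar R), (0 <= v)%E -> (pi (q, v) <= pi (q, 0%E))%E) /\
  ({within [set Q : query R n | (0 <= Q.2)%E], continuous pi} ->
     forall q : 'rV[R]_n, pi (q, +oo%E) = 0%E).
Proof.
move=> hpf haf.
have ge0 : forall q (v : \bar R), (0 <= v)%E -> (0 <= pi (q, v))%E.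
  by move=> q v v0; exact: (hpf (q, v) v0).
have mono : forall (q : 'rV[R]_n) (v v' : \bar R), (0 <= v)%E -> (v <= v')%E ->
     (pi (q, v') <= pi (q, v))%E.
  move=> q v v' v0 vv'.
  by have := haf _ _ (@det_relax R n q v v' v0 vv'); rewrite big_seq1.
have p00 : pi (0, 0%E) = 0%E.
  have := haf _ _ (@det_sum R n [::] (fun Q (H : Q \in [::]) => ltac:(by rewrite in_nil in H))).
  rewrite !big_nil => h; apply/le_anti; by rewrite h /= ge0.
have zero : forall v : \bar R, (0 <= v)%E -> pi (0, v) = 0%E.
  move=> v v0; apply/le_anti; rewrite ge0 // andbT.
  by rewrite -p00; apply: mono.
split; first exact: zero.
split; first exact: mono.
split; first by move=> q v v0; apply: mono.
move=> hc q.
have scl : forall c : R, c != 0 -> (pi (q, +oo%E) <= pi (c *: q, +oo%E))%E.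
  move=> c c0.
  have := haf _ _ (@det_scale R n (c *: q) +oo%E c^-1 ltac:(by [])).
  rewrite big_seq1 scalerA mulVf // scale1r.
  have -> : ((c^-1 ^+ 2)%:E * +oo)%E = +oo%E.
    by rewrite mulry gtr0_sg ?mul1e // lt_def sqr_ge0 sqrf_eq0 invr_eq0 c0.
  by [].
pose s := fun k : nat => ((harmonic k : R) *: q, +oo%E : \bar R).
have scv : s k @[k --> \oo] --> ((0 : 'rV[R]_n), +oo%E : \bar R).
  apply: (@cvg_pair _ _ _ _ (nbhs (0 : 'rV[R]_n)) (nbhs (+oo%E : \bar R)) _ _ _ (fun k => (harmonic k : R) *: q) (fun _ => +oo%E)); last exact: cvg_cst.
  rewrite -(scale0r q); apply: cvgZr_tmp; exact: cvg_harmonic.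
have A0 : [set Q : query R n | (0 <= Q.2)%E] ((0 : 'rV[R]_n), +oo%E) by rewrite /= leey.
have e : pi ((0 : 'rV[R]_n), +oo%E) = 0%E := zero _ (leey _).
have hcx : pi x @[x --> within [set Q : query R n | (0 <= Q.2)%E] (nbhs ((0 : 'rV[R]_n), +oo%E))] --> pi ((0 : 'rV[R]_n), +oo%E).
  exact: ((proj1 (subspace_continuousP _ _) hc) _ A0).
have pcv : pi (s k) @[k --> \oo] --> pi ((0 : 'rV[R]_n), +oo%E).
  apply: cvg_trans hcx.
  move=> P /= HP; have := scv _ HP => H.
  move: H; rewrite /nbhs /=; apply: filterS => k /=; apply; exact: leey.
apply/le_anti; rewrite ge0 ?leey // andbT -e.
apply: (closed_cvg [set x | (pi (q, +oo%E) <= x)%E] (@closed_ereal_le_ereal _ _) _ _ pcv).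
apply: nearW => k; apply: scl.
by rewrite gt_eqF // harmonic_gt0.
Qed.
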